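(* Let $(\mathcal{O},g,f)$ be an oriented matroid program with $\mathcal{O}$ of rank $r\ge 3$, and let $(C,X,Y)$ be a modular triple of cocircuits such that $z(C\circ X\circ Y)$ is a flat of rank $r-3$ of $\mathcal{M}(\mathcal{O})$, with $X_g=Y_g=+$ and $C_g=C_f=0$. Let $X^1,Y^1$ be distinct cocircuits with $X^1_g=Y^1_g=+$ such that $z(X^1)\supseteq z(X\circ C)$, $z(Y^1)\supseteq z(Y\circ C)$, $X\neq X^1\neq C$, $Y\neq Y^1\neq C$, and $X^1\circ Y^1$ is an edge. Then $X^1\leftrightarrow_{g,f}X$ and $Y^1\leftrightarrow_{g,f}Y$, and moreover $X^1\to_{g,f}Y^1$ if and only if $X\to_{g,f}Y$.
   Context: Oriented matroid $\mathcal{O}$ of rank $r$ on finite $E$, given by its cocircuits (sign vectors in $\{+,-,0\}^E$), underlying matroid $\mathcal{M}(\mathcal{O})$. Notation: $z(X)$ zero set, $\operatorname{sep}(X,Y)=\{e:X_e=-Y_e\ne0\}$, $(X\circ Y)_e=X_e$ if $X_e\ne0$, else $Y_e$. An edge is a covector whose zero set is a flat of rank $r-2$; cocircuits $X\ne\pm Y$ are comodular if $X\circ Y$ is an edge. A modular triple of cocircuits $(C,X,Y)$ is one in which each of the three pairs is comodular. For comodular $X,Y$ and $e\in\operatorname{sep}(X,Y)$, cocircuit elimination of $e$ between $X$ and $Y$ yields the unique cocircuit $Z$ with $Z_e=0$ and $Z_h=(X\circ Y)_h$ for $h\notin\operatorname{sep}(X,Y)$. An oriented matroid program $(\mathcal{O},g,f)$: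 $g\neq f\in E$, $g$ not a loop, $f$ not a coloop. For comodular $X,Y$ with $X_g=Y_g\ne0$, let $Z$ be obtained by eliminating $g$ between $-X$ and $Y$; $X\to_{g,f}Y$ if $Z_f=+$, $X\leftarrow_{g,f}Y$ if $Z_f=-$, $X\leftrightarrow_{g,f}Y$ if $Z_f=0$. *)

(* Defs.v *)
From mathcomp Require Import all_boot.
Set Implicit Arguments. Unset Strict Implicit. Unset Printing Implicit Defensive.

(* Signs: None = 0, Some true = +, Some false = - *)
Notation sign := (option bool).
Notation sz := (@None bool).
Notation sp := (Some true).
Notation sm := (Some false).

Section OM.
Variable E : finType.

Definition svec := {ffun E -> sign}.

Definition sv0 : svec := [ffun => None].
Definition svopp (X : svec) : svec := [ffun e => omap negb (X e)].
Definition svcomp (X Y : svec) : svec :=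
  [ffun e => if X e is Some b then Some b else Y e].
Definition zset (X : svec) : {set E} := [set e | X e == None].
Definition supp (X : svec) : {set E} := [set e | X e != None].
Definition sep (X Y : svec) : {set E} :=
  [set e | (X e != None) && (X e == omap negb (Y e))].

(* Signed cocircuit axioms (C0)-(C3) *)
Definition is_OM (O : {set svec}) : Prop :=
  [/\ sv0 \notin O,
      forall X, X \in O -> svopp X \in O,
      forall X Y, X \in O -> Y \in O -> supp X \subset supp Y ->
                  X = Y \/ X = svopp Y &
      forall X Y e, X \in O -> Y \in O -> X <> svopp Y -> e \in sep X Y ->
        exists2 Z, Z \in O &
          [/\ Z e = None,
              forall h, Z h = sp -> X h = sp \/ Y h = sp &
              forall h, Z h = sm -> X h = sm \/ Y h = sm]].

Definition covector (O : {set svec}) (X : svec) : Prop :=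
  exists2 s : seq svec, all (mem O) s & foldr svcomp sv0 s = X.

Definition is_flat (O : {set svec}) (A : {set E}) : Prop :=
  exists2 X, covector O X & zset X = A.

(* rank of a flat in the (geometric) lattice of flats: F has rank k iff the
   longest strictly increasing chain of flats ending at F has k+1 elements *)
Definition flat_chain (O : {set svec}) (F : {set E}) (s : seq {set E}) : Prop :=
  [/\ sorted (fun A B : {set E} => A \proper B) s,
      forall A, A \in s -> is_flat O A &
      last set0 s = F /\ s <> [::]].

Definition flat_rank (O : {set svec}) (F : {set E}) (k : nat) : Prop :=
  [/\ is_flat O F,
      exists2 s, flat_chain O F s & size s = k.+1 &
      forall s, flat_chain O F s -> size s <= k.+1].

Definition OM_rank (O : {set svec}) (r : nat) : Prop := flat_rank O [set: E] r.

Definition is_loop (O : {set svec}) (e : E) : Prop :=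
  forall X, X \in O -> X e = None.
Definition is_coloop (O : {set svec}) (e : E) : Prop :=
  exists2 X, X \in O & supp X = [set e].

Definition is_edge (O : {set svec}) (r : nat) (X : svec) : Prop :=
  covector O X /\ flat_rank O (zset X) (r - 2).

Definition comodular (O : {set svec}) (r : nat) (X Y : svec) : Prop :=
  [/\ X \in O, Y \in O, X <> Y, X <> svopp Y & is_edge O r (svcomp X Y)].

Definition modular_triple (O : {set svec}) (r : nat) (C X Y : svec) : Prop :=
  [/\ comodular O r C X, comodular O r C Y & comodular O r X Y].

Definition elim_result (O : {set svec}) (X Y : svec) (e : E) (Z : svec) : Prop :=
  [/\ Z \in O, Z e = None &
      forall h, h \notin sep X Y -> Z h = svcomp X Y h].

Definition is_program (O : {set svec}) (g f : E) : Prop :=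
  [/\ is_OM O, g <> f, ~ is_loop O g & ~ is_coloop O f].

(* X ->_{g,f} Y  (val = sp), X <-_{g,f} Y (val = sm), X <->_{g,f} Y (val = sz):
   X,Y comodular, X_g = Y_g <> 0, and the cocircuit Z obtained by eliminating g
   between -X and Y has Z_f = val. *)
Definition prog_rel (O : {set svec}) (r : nat) (g f : E) (v : sign)
    (X Y : svec) : Prop :=
  [/\ comodular O r X Y, X g = Y g, X g <> None &
      exists2 Z, elim_result O (svopp X) Y g Z & Z f = v].

End OM.

(* Main.v *)
Require Import Defs.
From mathcomp Require Import all_boot zify.
Set Implicit Arguments. Unset Strict Implicit. Unset Printing Implicit Defensive.

Section H.
Variable E : finType.
Implicit Types X Y Z P Q V W : svec E.

Lemma zset_comp X Y : zset (svcomp X Y) = zset X :&: zset Y.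
Proof. apply/setP=> e; rewrite !inE ffunE; by case: (X e). Qed.
Lemma svoppK X : svopp (svopp X) = X.
Proof. apply/ffunP=> e; rewrite !ffunE; by case: (X e) => [[]|]. Qed.
Lemma zset_opp X : zset (svopp X) = zset X.
Proof. apply/setP=> e; rewrite !inE ffunE; by case: (X e). Qed.
Lemma svcomp0 X : svcomp X (sv0 E) = X.
Proof. apply/ffunP=> e; rewrite !ffunE; by case: (X e). Qed.
Lemma zset0 : zset (sv0 E) = setT.
Proof. by apply/setP=> e; rewrite !inE ffunE. Qed.

Lemma zset_foldr s Y : zset (foldr (@svcomp E) Y s) = zset (foldr (@svcomp E) (sv0 E) s) :&: zset Y.
Proof.
elim: s => [|x s IH] /=; first by rewrite zset0 setTI.
by rewrite !zset_comp IH setIA.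
Qed.

Definition ch O (A : {set E}) n := exists2 s, flat_chain O A s & size s = n.

Lemma ch_ext O (A B : {set E}) n : ch O A n -> A \proper B -> is_flat O B -> ch O B n.+1.
Proof.
case=> s [Hs Hf [Hl Hn]] <- AB FB.
exists (rcons s B); last by rewrite size_rcons.
split.
- case: s Hs Hf Hl Hn => [|x s] //= Hs Hf Hl _.
  by rewrite rcons_path Hs /= Hl.
- move=> C; rewrite mem_rcons inE => /orP [/eqP ->|]; [done| exact: Hf].
- by rewrite last_rcons; split => //; case: s {Hs Hf Hl Hn}.
Qed.

Definition HG O (L : {set E}) := forall M N, is_flat O M -> is_flat O N ->
  L \proper M -> M \proper N -> N \proper setT -> False.

Lemma HG_of O r (L : {set E}) : OM_rank O r -> 2 <= r -> flat_rank O L (r - 2) -> HG O L.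
Proof.
move=> [FT _ HE] r2 [FL [s Hs Hsz] _] M N FM FN LM MN NT.
have H0 : ch O L (r-2).+1 by exists s.
have [s' Hs' Hsz'] := ch_ext (ch_ext (ch_ext H0 LM FM) MN FN) NT FT.
have := HE s' Hs'. rewrite Hsz'. lia.
Qed.

Lemma HG3 O r (K M1 M2 M3 : {set E}) : OM_rank O r -> 3 <= r -> flat_rank O K (r - 3) ->
  is_flat O M1 -> is_flat O M2 -> is_flat O M3 ->
  K \proper M1 -> M1 \proper M2 -> M2 \proper M3 -> M3 \proper setT -> False.
Proof.
move=> [FT _ HE] r3 [FL [s Hs Hsz] _] F1 F2 F3 P1 P2 P3 P4.
have H0 : ch O K (r-3).+1 by exists s.
have [s' Hs' Hsz'] := ch_ext (ch_ext (ch_ext (ch_ext H0 P1 F1) P2 F2) P3 F3) P4 FT.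
have := HE s' Hs'. rewrite Hsz'. lia.
Qed.

Variable O : {set svec E}.
Hypothesis HO : is_OM O.

Lemma zset_flat P : P \in O -> is_flat O (zset P).
Proof.
move=> PO; exists P => //; exists [:: P]; first by rewrite /= PO.
by rewrite /= svcomp0.
Qed.

Lemma flatI (A B : {set E}) : is_flat O A -> is_flat O B -> is_flat O (A :&: B).
Proof.
case=> X [s1 Hs1 <-] <- [Y [s2 Hs2 <-] <-].
exists (foldr (@svcomp E) (sv0 E) (s1 ++ s2)).
  by exists (s1 ++ s2) => //; rewrite all_cat Hs1.
by rewrite foldr_cat zset_foldr.
Qed.

Lemma zsetT P : P \in O -> zset P \proper setT.
Proof.
case: HO => C0 _ _ _ PO; rewrite properT; apply/negP => /eqP HP.
have : P = sv0 E.
  apply/ffunP=> e; have: e \in zset P by rewrite HP inE.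
  by rewrite inE ffunE => /eqP.
by move=> E0; move: C0; rewrite -E0 PO.
Qed.

Lemma C2z P Q : P \in O -> Q \in O -> zset Q \subset zset P -> P = Q \/ P = svopp Q.
Proof.
case: HO => _ _ C2 _ PO QO H; apply: C2 => //.
apply/subsetP => e; rewrite !inE; apply: contra => He.
by move: (subsetP H e); rewrite !inE; apply.
Qed.

Lemma sub_supp P Q e : P \in O -> Q \in O -> P e = None -> Q e != None ->
  (forall k, P k != None -> Q k != None) -> False.
Proof.
case: HO => _ _ C2 _ PO QO Pe Qe H.
have [] : P = Q \/ P = svopp Q.
  apply: C2 => //; apply/subsetP => k; rewrite !inE; exact: H.
- by move=> PQ; move: Qe; rewrite -PQ Pe.
- by move=> PQ; move: Pe; rewrite PQ ffunE; move: Qe; case: (Q e).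
Qed.

Lemma lemU (L : {set E}) P Q h : HG O L -> P \in O -> Q \in O -> L \subset zset P -> L \subset zset Q ->
  h \in zset P -> h \in zset Q -> h \notin L -> Q = P \/ Q = svopp P.
Proof.
move=> HL PO QO LP LQ hP hQ hL.
have LM : L \proper zset P :&: zset Q.
  apply/properP; split; first by rewrite subsetI LP LQ.
  by exists h => //; rewrite inE hP hQ.
case: (eqVneq (zset P :&: zset Q) (zset P)) => HM.
  apply: C2z => //; by rewrite -HM subsetIr.
exfalso; apply: (HL _ _ _ _ LM _ (zsetT PO)).
- exact: flatI (zset_flat PO) (zset_flat QO).
- exact: zset_flat.
- by rewrite properEneq HM subsetIl.
Qed.

Lemma same_line (L : {set E}) P Q : HG O L -> P \in O -> Q \in O -> L \subset zset P -> L \subset zset Q ->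
  P <> Q -> P <> svopp Q -> zset P :&: zset Q = L.
Proof.
move=> HL PO QO LP LQ PQ PnQ; apply/eqP; rewrite eqEsubset; apply/andP; split; last by rewrite subsetI LP LQ.
apply/subsetP => k; rewrite inE => /andP [kP kQ].
apply/negPn/negP => kL.
case: (lemU HL PO QO LP LQ kP kQ kL) => H.
- by apply: PQ.
- by apply: PnQ; rewrite H svoppK.
Qed.

Lemma ER_over X Y e Z : elim_result O X Y e Z -> forall h, X h = None -> Y h = None -> Z h = None.
Proof.
case=> _ _ H h Xh Yh; rewrite H; last by rewrite inE Xh.
by rewrite ffunE Xh Yh.
Qed.

Lemma ER_notY X Y e Z h : elim_result O X Y e Z -> Y h = None -> Z h = X h.
Proof.
case=> _ _ H Yh; rewrite H; last by rewrite inE Yh /=; case: (X h).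
by rewrite ffunE Yh; case: (X h).
Qed.

End H.
Section H2.
Variable E : finType.
Implicit Types X Y Z P Q V W : svec E.
Variable O : {set svec E}.
Hypothesis HO : is_OM O.

Lemma signs X Y Z : (forall h, Z h = sp -> X h = sp \/ Y h = sp) ->
  (forall h, Z h = sm -> X h = sm \/ Y h = sm) ->
  forall h d, Z h = Some d -> X h = Some d \/ Y h = Some d.
Proof. by move=> Hp Hm h [] H; [apply: Hp|apply: Hm]. Qed.

Lemma ME (L : {set E}) X Y e : HG O L -> L = zset X :&: zset Y -> X \in O -> Y \in O ->
  X <> Y -> X <> svopp Y -> e \in sep X Y -> exists Z, elim_result O X Y e Z.
Proof.
move=> HL DL XO YO XY XnY eS.
have HO' := HO; case: HO' => _ C1 _ C3.
have [Z ZO [Ze Hp Hm]] := C3 X Y e XO YO XnY eS.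
have hZ := signs Hp Hm.
have Xe : X e != None by move: eS; rewrite inE => /andP [].
have Ye : Y e != None.
  by move: eS; rewrite inE => /andP [H /eqP E']; move: H; rewrite E'; case: (Y e).
have ZL : L \subset zset Z.
  apply/subsetP => k; rewrite DL !inE => /andP [/eqP Xk /eqP Yk].
  case Zk: (Z k) => [d|] //; by case: (hZ _ _ Zk); rewrite ?Xk ?Yk.
have LX : L \subset zset X by rewrite DL subsetIl.
have LY : L \subset zset Y by rewrite DL subsetIr.
exists Z; split => // h; rewrite inE negb_and negbK ffunE.
case Xh: (X h) => [b|]; case Yh: (Y h) => [c|] /=.
-
  move=> /eqP Hbc.
  have cb : c = b by case: b c Hbc {Xh Yh} => [] [].
  subst c.
  case Zh: (Z h) => [d|].
    by case: (hZ _ _ Zh); rewrite ?Xh ?Yh // => -[->].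
  exfalso.
  have hS : h \in sep X (svopp Y) by rewrite inE ffunE Xh Yh /= negbK eqxx.
  have YnY : X <> svopp (svopp Y) by rewrite svoppK.
  have [W WO [Wh Hp' Hm']] := C3 X (svopp Y) h XO (C1 _ YO) YnY hS.
  have hW := signs Hp' Hm'.
  have WL : L \subset zset W.
    apply/subsetP => k; rewrite DL !inE => /andP [/eqP Xk /eqP Yk].
    case Wk: (W k) => [d|] //; by case: (hW _ _ Wk); rewrite ?Xk ?ffunE ?Yk.
  have hL : h \notin L by rewrite DL !inE Xh.
  have hZ' : h \in zset Z by rewrite inE Zh.
  have hW' : h \in zset W by rewrite inE Wh.
  case: (lemU HO HL ZO WO ZL WL hZ' hW' hL) => HW.
  + apply: (sub_supp HO ZO XO Ze Xe) => k.
    case Zk: (Z k) => [d|] // _.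
    have := hW k d; rewrite HW Zk => /(_ erefl); rewrite ffunE.
    case: (hZ _ _ Zk) => [->//|->]; by case=> [->|] //; case: d {Zk}.
  + apply: (sub_supp HO ZO YO Ze Ye) => k.
    case Zk: (Z k) => [d|] // _.
    have := hW k (~~ d); rewrite HW ffunE Zk => /(_ erefl); rewrite ffunE.
    case: (hZ _ _ Zk) => [Xk|->//].
    rewrite Xk; case=> [[]|]; first by case: d {Zk Xk}.
    by case: (Y k) => // y [] <-; rewrite negbK.
- move=> _.
  case Zh: (Z h) => [d|].
    by case: (hZ _ _ Zh); rewrite ?Xh ?Yh // => -[->].
  exfalso.
  have hL : h \notin L by rewrite DL !inE Xh.
  have hZ' : h \in zset Z by rewrite inE Zh.
  have hY' : h \in zset Y by rewrite inE Yh.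
  case: (lemU HO HL ZO YO ZL LY hZ' hY' hL) => HY.
  + by move: Ye; rewrite HY Ze.
  + by move: Ye; rewrite HY ffunE Ze.
- move=> _.
  case Zh: (Z h) => [d|].
    by case: (hZ _ _ Zh); rewrite ?Xh ?Yh // => -[->].
  exfalso.
  have hL : h \notin L by rewrite DL !inE Yh andbF.
  have hZ' : h \in zset Z by rewrite inE Zh.
  have hX' : h \in zset X by rewrite inE Xh.
  case: (lemU HO HL ZO XO ZL LX hZ' hX' hL) => HX.
  + by move: Xe; rewrite HX Ze.
  + by move: Xe; rewrite HX ffunE Ze.
- move=> _.
  case Zh: (Z h) => [d|] //.
  by case: (hZ _ _ Zh); rewrite ?Xh ?Yh.
Qed.


Lemma zero_par (L : {set E}) V R p q : HG O L -> V \in O -> R \in O ->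
  L \subset zset V -> L \subset zset R -> p \in zset V -> q \in zset V -> p \notin L ->
  R p = None -> R q = None.
Proof.
move=> HL VO RO LV LR pV qV pL Rp.
have pR : p \in zset R by rewrite inE Rp.
move: qV; rewrite inE.
case: (lemU HO HL RO VO LR LV pR pV pL) => ->; rewrite ?ffunE; first by move/eqP.
by case: (R q).
Qed.

Lemma F1 (L : {set E}) V P Q p q : HG O L -> V \in O -> P \in O -> Q \in O ->
  L \subset zset V -> L \subset zset P -> L \subset zset Q ->
  p \in zset V -> q \in zset V -> p \notin L -> q \notin L ->
  P p = Q p -> P q = Q q.
Proof.
move=> HL VO PO QO LV LP LQ pV qV pL qL PQp.
case Pp: (P p) => [s|].
  2: by rewrite (zero_par HL VO PO LV LP pV qV pL Pp) (zero_par HL VO QO LV LQ pV qV pL); rewrite -?PQp.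
case: (eqVneq (P q) (Q q)) => // Hne; exfalso.
have Pq : P q != None.
  apply/negP => /eqP H; move: Pp; by rewrite (zero_par HL VO PO LV LP qV pV qL H).
have Qq : Q q != None.
  apply/negP => /eqP H; move: PQp; by rewrite Pp (zero_par HL VO QO LV LQ qV pV qL H).
have Hopp : P q = omap negb (Q q).
  by move: Pq Qq Hne; case: (P q) => [[]|] //; case: (Q q) => [[]|].
have PnQ : P <> Q by move=> H; move: Hne; rewrite H eqxx.
have PnQ' : P <> svopp Q by move=> H; move: PQp Pp; rewrite H ffunE; by case: (Q p) => [[]|].
have DL := same_line HO HL PO QO LP LQ PnQ PnQ'.
have qS : q \in sep P Q by rewrite inE Pq Hopp eqxx.
have [Z ZE] := ME HL (esym DL) PO QO PnQ PnQ' qS.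
have Zp : Z p = Some s.
  case: (ZE) => _ _ H; rewrite H ?ffunE ?Pp //.
  by rewrite inE Pp -PQp Pp /=; case: s {Pp PQp}.
case: (ZE) => ZO Zq _.
have ZL : L \subset zset Z.
  apply/subsetP => k kL; rewrite inE (ER_over ZE); [by []| |].
  - by move/subsetP: LP => /(_ k kL); rewrite inE => /eqP.
  - by move/subsetP: LQ => /(_ k kL); rewrite inE => /eqP.
have qZ : q \in zset Z by rewrite inE Zq.
by move: (zero_par HL VO ZO LV ZL qV pV qL Zq); rewrite Zp.
Qed.

End H2.

Unset Implicit Arguments.
Theorem lemma4p4 (E : finType) (O : {set svec E}) (g f : E) (r : nat)
    (C X Y X1 Y1 : svec E) :
  is_program O g f ->
  OM_rank O r -> 3 <= r ->
  modular_triple O r C X Y ->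
  flat_rank O (zset (svcomp (svcomp C X) Y)) (r - 3) ->
  X g = sp -> Y g = sp -> C g = sz -> C f = sz ->
  X1 \in O -> Y1 \in O -> X1 <> Y1 ->
  X1 g = sp -> Y1 g = sp ->
  zset (svcomp X C) \subset zset X1 ->
  zset (svcomp Y C) \subset zset Y1 ->
  X <> X1 -> X1 <> C -> Y <> Y1 -> Y1 <> C ->
  is_edge O r (svcomp X1 Y1) ->
  [/\ prog_rel O r g f sz X1 X,
      prog_rel O r g f sz Y1 Y &
      (prog_rel O r g f sp X1 Y1 <-> prog_rel O r g f sp X Y)].
Proof.
move=> [HO gf _ _] Hr r3 [[CO XO CX CnX [_ eCX]] [_ YO CY CnY [_ eCY]] [_ _ XY XnY eXY]]
  HK Xg Yg Cg Cf X1O Y1O X1Y1 X1g Y1g HX1 HY1 XX1 X1C YY1 Y1C e11.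
have C1 : forall P : svec E, P \in O -> svopp P \in O by case: HO.
have r2 : 2 <= r by lia.
rewrite zset_comp in eCX; rewrite zset_comp in eCY.
rewrite zset_comp setIC in HX1; rewrite zset_comp setIC in HY1.
set LXC := zset C :&: zset X in eCX HX1.
set LYC := zset C :&: zset Y in eCY HY1.
have HXC := HG_of Hr r2 eCX.
have HYC := HG_of Hr r2 eCY.
have HXY := HG_of Hr r2 (proj2 eXY); rewrite zset_comp in HXY.
have H11 := HG_of Hr r2 (proj2 e11); rewrite zset_comp in H11.
have gopp : forall P Q : svec E, P g = sp -> Q g = sp -> P <> svopp Q.
  by move=> P Q Pg Qg H; move: Pg; rewrite H ffunE Qg.
have gopp' : forall P Q : svec E, P g = sp -> Q g = sp -> svopp P <> Q.
  by move=> P Q Pg Qg H; move: Qg; rewrite -H ffunE Pg.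
have oppI : forall P Q : svec E, P <> Q -> svopp P <> svopp Q.
  by move=> P Q H H'; apply: H; rewrite -(svoppK P) H' svoppK.
have gsep : forall P Q : svec E, P g = sp -> Q g = sp -> g \in sep (svopp P) Q.
  by move=> P Q Pg Qg; rewrite inE !ffunE Pg Qg.
have covP : forall P Q : svec E, P \in O -> Q \in O -> covector O (svcomp P Q).
  by move=> P Q PO QO; exists [:: P; Q]; rewrite /= ?PO ?QO // svcomp0.
have part : forall (P P1 : svec E) (LP : {set E}), P \in O -> P1 \in O -> P g = sp -> P1 g = sp ->
    P <> P1 -> LP = zset C :&: zset P -> HG O LP -> flat_rank O LP (r - 2) ->
    LP \subset zset P1 -> prog_rel O r g f sz P1 P.
  move=> P P1 LP PO P1O Pg P1g PP1 DLP HLP rLP LP1.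
  have LPP : LP \subset zset P by rewrite DLP subsetIr.
  have LPC : LP \subset zset C by rewrite DLP subsetIl.
  have DL := same_line HO HLP P1O PO LP1 LPP (nesym PP1) (gopp _ _ P1g Pg).
  split; rewrite ?P1g ?Pg //.
    split => //; [exact: nesym | exact: gopp | split; first exact: covP].
    by rewrite zset_comp DL.
  have [Z ZE] := ME HO HLP (esym (etrans (congr1 (fun A => A :&: _) (zset_opp P1)) DL))
     (C1 _ P1O) PO (gopp' _ _ P1g Pg) (oppI _ _ (nesym PP1)) (gsep _ _ P1g Pg).
  exists Z => //.
  case: (ZE) => ZO Zg _.
  have ZL : LP \subset zset Z.
    apply/subsetP => k kL; rewrite inE (ER_over ZE); [by []| |].
    - by move/subsetP: LP1 => /(_ k kL); rewrite inE ffunE => /eqP ->.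
    - by move/subsetP: LPP => /(_ k kL); rewrite inE => /eqP.
  have gL : g \notin LP by rewrite DLP !inE Pg andbF.
  have gC : g \in zset C by rewrite inE Cg.
  have gZ : g \in zset Z by rewrite inE Zg.
  by case: (lemU HO HLP CO ZO LPC ZL gC gZ gL) => ->; rewrite ?ffunE Cf.
have P1 := part X X1 LXC XO X1O Xg X1g XX1 erefl HXC eCX HX1.
have P2 := part Y Y1 LYC YO Y1O Yg Y1g YY1 erefl HYC eCY HY1.
split => //.
rewrite !zset_comp in HK.
set K := zset C :&: zset X :&: zset Y in HK.
have gK : g \notin K by rewrite !inE Xg andbF.
have KY : K \proper LYC.
  rewrite properEneq; apply/andP; split.
    apply/eqP => H; case: HK => _ _ Hub; case: eCY => _ [s Hs Hsz] _.
    move: Hs; rewrite -H => /Hub; rewrite Hsz; lia.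
  by apply/subsetP => k; rewrite !inE => /andP [/andP [-> _] ->].
have [_ [b bY bK]] := properP KY.
have Cb : C b = None by move: bY; rewrite !inE => /andP [/eqP].
have Yb : Y b = None by move: bY; rewrite !inE => /andP [_ /eqP].
have Xb : X b != None by move: bK; rewrite !inE Cb Yb /= andbT.
have Y1b : Y1 b = None by move/subsetP: HY1 => /(_ b bY); rewrite inE => /eqP.
have gC : g \in zset C by rewrite inE Cg.
have bC : b \in zset C by rewrite inE Cb.
have Xb1 : X b = X1 b.
  apply: (F1 HO HXC CO XO X1O (subsetIl _ _) (subsetIr _ _) HX1 gC bC).
  - by rewrite !inE Xg andbF.
  - by rewrite !inE negb_and Xb orbT.
  - by rewrite Xg X1g.
have KX1 : K \subset zset X1.
  apply: subset_trans HX1; by apply/subsetP => k; rewrite !inE => /andP [/andP [-> ->] _].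
have KY1 : K \subset zset Y1.
  apply: subset_trans HY1; by apply/subsetP => k; rewrite !inE => /andP [/andP [-> _] ->].
have MAIN : forall W W1 : svec E, elim_result O (svopp X) Y g W ->
    elim_result O (svopp X1) Y1 g W1 -> W f = W1 f.
  move=> W W1 WE W1E.
  have Wb : W b = svopp X b := ER_notY WE Yb.
  have W1b : W1 b = svopp X1 b := ER_notY W1E Y1b.
  have WbN : W b != None by rewrite Wb ffunE; move: Xb; case: (X b).
  case: (WE) => WO Wg _; case: (W1E) => W1O W1g _.
  have KW : K \subset zset W.
    apply/subsetP => k; rewrite !inE => /andP [/andP [_ /eqP Xk] /eqP Yk].
    by rewrite (ER_over WE) // ffunE Xk.
  have KW1 : K \subset zset W1.
    apply/subsetP => k kK; rewrite inE (ER_over W1E) //.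
    - by move/subsetP: KX1 => /(_ k kK); rewrite inE ffunE => /eqP ->.
    - by move/subsetP: KY1 => /(_ k kK); rewrite inE => /eqP.
  set Lg := zset C :&: zset W.
  have FLg : is_flat O Lg := flatI (zset_flat CO) (zset_flat WO).
  have KLg : K \proper Lg.
    apply/properP; split.
      rewrite subsetI KW andbT.
      by apply/subsetP => k; rewrite !inE => /andP [/andP [-> _] _].
    by exists g => //; rewrite !inE Cg Wg.
  have HLg : HG O Lg := fun M N FM FN LM MN NT => HG3 Hr r3 HK FLg FM FN KLg LM MN NT.
  have LgC : Lg \proper zset C.
    rewrite properEneq subsetIl andbT; apply/eqP => H.
    have : zset C \subset zset W by rewrite -H subsetIr.
    case/(C2z HO WO CO) => HW; move: WbN; by rewrite HW ?ffunE Cb.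
  have LgW1 : Lg \subset zset W1.
    case: (boolP (Lg \subset zset W1)) => // H; exfalso.
    have KM : K \proper zset W1 :&: Lg.
      apply/properP; split; first by rewrite subsetI KW1 (proper_sub KLg).
      by exists g => //; rewrite !inE Cg Wg W1g.
    have ML : zset W1 :&: Lg \proper Lg.
      rewrite properEneq subsetIr andbT; apply/eqP => H'.
      by move: H; rewrite -H' subsetIl.
    exact: (HG3 Hr r3 HK (flatI (zset_flat W1O) FLg) FLg (zset_flat CO)
               KM ML LgC (zsetT HO CO)).
  case: (boolP (f \in Lg)) => fL.
    have := subsetP LgW1 f fL; rewrite inE => /eqP ->.
    by move: fL; rewrite !inE => /andP [_ /eqP].
  apply: (F1 HO HLg CO WO W1O (subsetIl _ _) (subsetIr _ _) LgW1 bC) => //.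
  - by rewrite inE Cf.
  - by rewrite !inE negb_and WbN orbT.
  - by rewrite Wb W1b !ffunE Xb1.
have cXY : comodular O r X Y by split.
have c11 : comodular O r X1 Y1 by split => //; exact: gopp.
split.
- move=> [_ _ _ [W1 W1E W1f]].
  split; rewrite ?Xg ?Yg //.
  have [W WE] := ME HO HXY (esym (congr1 (fun A => A :&: zset Y) (zset_opp X)))
     (C1 _ XO) YO (gopp' _ _ Xg Yg) (oppI _ _ XY) (gsep _ _ Xg Yg).
  by exists W => //; rewrite (MAIN _ _ WE W1E).
- move=> [_ _ _ [W WE Wf]].
  split; rewrite ?X1g ?Y1g //.
  have [W1 W1E] := ME HO H11 (esym (congr1 (fun A => A :&: zset Y1) (zset_opp X1)))
     (C1 _ X1O) Y1O (gopp' _ _ X1g Y1g) (oppI _ _ X1Y1) (gsep _ _ X1g Y1g).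
  by exists W1 => //; rewrite -(MAIN _ _ WE W1E).
Qed.
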